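(* One has $$[4;\overline{4}]+[0;3,\overline{1,3,1,2}]=\frac92=[3;1,3,\overline{4}]+[0;\overline{1,2,1,3}].$$ In particular, $$\frac92=m(\overline{4}\,3\,\overline{1312})=\lim_{n\to\infty}m\big(\overline{4^n\,3\,(1312)^n\,1313}\big)\in L\cap\mathbb{Q}.$$
   Context: Overlines in continued fractions denote infinite periodic repetition of the indicated block. $\overline{4}\,3\,\overline{1312}$ denotes the bi-infinite sequence $\dots4443131213121312\dots$ (all $4$'s to the left of a single $3$, followed by periodic repetition of $1312$), and $\overline{4^n3(1312)^n1313}$ denotes the bi-infinite periodic sequence obtained by repeating the finite block consisting of $n$ copies of $4$, then $3$, then $n$ copies of $1312$, then $1313$. For $\underline a\in(\mathbb{N}^* )^{\mathbb{Z}}$, $\lambda_0(\underline a)=[a_0;a_1,\dots]+[0;a_{-1},a_{-2},\dots]$, $m(\underline a)=\sup_n\lambda_0(\sigma^n\underline a)$ with $\sigma$ the left shift, and $L=\{\limsup_{n\to\infty}\lambda_0(\sigma^n\underline a):\underline a\in(\mathbb{N}^* )^{\mathbb{Z}}\}$ is the Lagrange spectrum. *)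

(* Defs.v *)
From Stdlib Require Import Reals ZArith List Lra.
From Coquelicot Require Import Coquelicot.
Import ListNotations.
Open Scope R_scope.

Fixpoint cf_fin (n : nat) (a : nat -> nat) : R :=
  match n with
  | O => INR (a O)
  | S n' => INR (a O) + / cf_fin n' (fun k => a (S k))
  end.

(* Infinite continued fraction [a_0; a_1, a_2, ...] := limit of the convergents
   (which exists whenever a_k >= 1 for k >= 1). *)
Definition cf (a : nat -> nat) : R := real (Lim_seq (fun n => cf_fin n a)).

Definition shiftZ (n : Z) (a : Z -> nat) : Z -> nat := fun i => a (i + n)%Z.

(* lambda_0(a) = [a_0; a_1, ...] + [0; a_{-1}, a_{-2}, ...]
   where [0; b_1, b_2, ...] = 1 / [b_1; b_2, ...]. *)
Definition lambda0 (a : Z -> nat) : R :=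
  cf (fun k => a (Z.of_nat k)) + / cf (fun k => a (- Z.of_nat k - 1)%Z).

Definition mval (a : Z -> nat) : Rbar :=
  Lub_Rbar (fun x => exists n : Z, x = lambda0 (shiftZ n a)).

Definition in_Lagrange (x : R) : Prop :=
  exists a : Z -> nat, (forall i, (0 < a i)%nat) /\
    LimSup_seq (fun n : nat => lambda0 (shiftZ (Z.of_nat n) a)) = Finite x.

(* Periodic extension of a finite block b (indexed so that position 0 is b_0). *)
Definition periodic (b : list nat) : Z -> nat :=
  fun i => nth (Z.to_nat (i mod Z.of_nat (length b))) b 1%nat.

Definition block (n : nat) : list nat :=
  repeat 4%nat n ++ [3%nat] ++ concat (repeat [1;3;1;2]%nat n) ++ [1;3;1;3]%nat.

(* The sequence  ...444 3 131213121312...  (3 at position 0). *)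
Definition seq43 : Z -> nat :=
  fun i => if (i <? 0)%Z then 4%nat
           else if (i =? 0)%Z then 3%nat
           else nth (Z.to_nat ((i - 1) mod 4)) [1;3;1;2]%nat 1%nat.

Definition all4 : nat -> nat := fun _ => 4%nat.
Definition s3_1312 : nat -> nat :=
  fun k => match k with O => 3%nat | S j => nth (j mod 4) [1;3;1;2]%nat 1%nat end.
Definition s313_4 : nat -> nat :=
  fun k => match k with O => 3%nat | 1 => 1%nat | 2 => 3%nat | _ => 4%nat end.
Definition s1213 : nat -> nat := fun k => nth (k mod 4) [1;2;1;3]%nat 1%nat.

(* Main.v *)
Require Import Defs.
From Stdlib Require Import Reals ZArith List.
From Coquelicot Require Import Coquelicot.
From Stdlib Require Import Lia Lra FunctionalExtensionality.
Import ListNotations.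
Open Scope R_scope.


Definition good (a : nat -> nat) := forall k, (1 <= a k <= 4)%nat.
Definition ctl (a : nat -> nat) : nat -> nat := fun k => a (S k).
Definition q := 25/36.

Lemma good_tl a : good a -> good (ctl a).
Proof. intros H k. apply H. Qed.

Lemma INR_14 x : (1 <= x <= 4)%nat -> 1 <= INR x <= 4.
Proof. intros [H1 H2]. apply le_INR in H1. apply le_INR in H2. simpl in *. lra. Qed.

Lemma inv_bnd x : 1 <= x -> 0 < / x <= 1.
Proof. intros. split. apply Rinv_0_lt_compat; lra.
  rewrite <- Rinv_1. apply Rinv_le_contravar; lra. Qed.

Lemma inv_le x y : 0 < x -> x <= y -> / y <= / x.
Proof. intros. apply Rinv_le_contravar; lra. Qed.

Lemma cf_fin_bnd n : forall a, good a -> INR (a 0%nat) <= cf_fin n a <= INR (a 0%nat) + 1.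
Proof.
  induction n; intros a Ha; simpl.
  - lra.
  - pose proof (IHn (ctl a) (good_tl a Ha)) as H. unfold ctl in H.
    pose proof (INR_14 _ (Ha 1%nat)).
    assert (1 <= cf_fin n (fun k => a (S k))) by lra.
    pose proof (inv_bnd _ H1). lra.
Qed.

Lemma cf_fin_ge n a : good a -> (1 <= n)%nat -> 6/5 <= cf_fin n a.
Proof.
  intros Ha Hn. destruct n as [|n]; [lia|]. simpl.
  pose proof (cf_fin_bnd n (ctl a) (good_tl a Ha)) as H. unfold ctl in H.
  pose proof (INR_14 _ (Ha 1%nat)). pose proof (INR_14 _ (Ha 0%nat)).
  assert (/ 5 <= / cf_fin n (fun k => a (S k))) by (apply inv_le; lra). lra.
Qed.

Lemma inv_diff x y : 6/5 <= x -> 6/5 <= y -> Rabs (/x - /y) <= q * Rabs (x - y).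
Proof.
  intros. replace (/x - /y) with ((y - x) * / (x*y)) by (field; lra).
  rewrite Rabs_mult. rewrite (Rabs_pos_eq (/ (x*y))).
  2: { left. apply Rinv_0_lt_compat. nra. }
  rewrite <- Rabs_Ropp. replace (- (y - x)) with (x - y) by ring.
  assert (/ (x*y) <= q). { unfold q. replace (25/36) with (/ (36/25)) by field.
    apply inv_le; nra. }
  pose proof (Rabs_pos (x-y)). nra.
Qed.

Lemma inv_diff1 x y : 1 <= x -> 1 <= y -> Rabs (/x - /y) <= Rabs (x - y).
Proof.
  intros. replace (/x - /y) with ((y - x) * / (x*y)) by (field; lra).
  rewrite Rabs_mult. rewrite (Rabs_pos_eq (/ (x*y))).
  2: { left. apply Rinv_0_lt_compat. nra. }
  rewrite <- Rabs_Ropp. replace (- (y - x)) with (x - y) by ring.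
  assert (/ (x*y) <= 1). { rewrite <- Rinv_1. apply inv_le; nra. }
  pose proof (Rabs_pos (x-y)). nra.
Qed.

Lemma cf_fin_cauchy k : forall a n m, good a -> (S k <= n)%nat -> (S k <= m)%nat ->
  Rabs (cf_fin n a - cf_fin m a) <= q ^ k.
Proof.
  induction k; intros a n m Ha Hn Hm.
  - simpl. destruct n as [|n]; [lia|]. destruct m as [|m]; [lia|].
    pose proof (cf_fin_bnd (S n) a Ha). pose proof (cf_fin_bnd (S m) a Ha).
    apply Rabs_le. lra.
  - destruct n as [|n]; [lia|]. destruct m as [|m]; [lia|]. simpl.
    replace (INR (a 0%nat) + / cf_fin n (fun k0 => a (S k0)) -
      (INR (a 0%nat) + / cf_fin m (fun k0 => a (S k0))))
      with (/ cf_fin n (ctl a) - / cf_fin m (ctl a)) by (unfold ctl; ring).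
    eapply Rle_trans. apply inv_diff; apply cf_fin_ge; try apply good_tl; auto; lia.
    pose proof (IHk (ctl a) n m (good_tl a Ha) ltac:(lia) ltac:(lia)).
    unfold q in *. nra.
Qed.

Lemma q_bnd : 0 < q < 1.
Proof. unfold q. lra. Qed.

Lemma cf_fin_exfin a : good a -> ex_finite_lim_seq (fun n => cf_fin n a).
Proof.
  intros Ha. apply ex_lim_seq_cauchy_corr. intros eps.
  destruct (pow_lt_1_zero q ltac:(rewrite Rabs_pos_eq; unfold q; lra) eps (cond_pos eps)) as [N HN].
  exists (S N). intros n m Hn Hm.
  eapply Rle_lt_trans. apply (cf_fin_cauchy N); auto.
  specialize (HN N (le_n N)). rewrite Rabs_pos_eq in HN; auto.
  apply pow_le. unfold q; lra.
Qed.

Lemma cf_lim a : good a -> is_lim_seq (fun n => cf_fin n a) (cf a).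
Proof.
  intros Ha. pose proof (cf_fin_exfin a Ha) as H.
  apply ex_finite_lim_seq_correct in H as [H1 H2].
  unfold cf. unfold is_finite in H2. rewrite H2. apply Lim_seq_correct. auto.
Qed.

Lemma cf_bnd a : good a -> INR (a 0%nat) <= cf a <= INR (a 0%nat) + 1.
Proof.
  intros Ha. pose proof (cf_lim a Ha). split.
  - assert (Rbar_le (INR (a 0%nat)) (cf a)).
    { eapply is_lim_seq_le. 2: apply is_lim_seq_const. 2: exact H.
      intros n. apply cf_fin_bnd; auto. }
    simpl in H0. auto.
  - assert (Rbar_le (cf a) (INR (a 0%nat) + 1)).
    { eapply is_lim_seq_le. 3: apply is_lim_seq_const. 2: exact H.
      intros n. apply cf_fin_bnd; auto. }
    simpl in H0. auto.
Qed.

Lemma cf_ge1 a : good a -> 1 <= cf a <= 5.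
Proof. intros Ha. pose proof (cf_bnd a Ha). pose proof (INR_14 _ (Ha 0%nat)). lra. Qed.

Lemma cf_tail a : good a -> cf a = INR (a 0%nat) + / cf (ctl a).
Proof.
  intros Ha. pose proof (cf_lim a Ha) as H1.
  apply is_lim_seq_incr_1 in H1.
  pose proof (cf_lim (ctl a) (good_tl a Ha)) as H2.
  pose proof (cf_ge1 (ctl a) (good_tl a Ha)).
  assert (H3 : is_lim_seq (fun n => INR (a 0%nat) + / cf_fin n (ctl a)) (INR (a 0%nat) + / cf (ctl a))).
  { apply is_lim_seq_plus'. apply is_lim_seq_const.
    apply (is_lim_seq_inv _ (cf (ctl a))) in H2. exact H2.
    intro E. injection E. lra. }
  apply is_lim_seq_unique in H1. apply is_lim_seq_unique in H3.
  simpl in H1. unfold ctl in H3. rewrite H1 in H3. injection H3. auto.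
Qed.

Lemma cf_ge65 a : good a -> 6/5 <= cf a.
Proof.
  intros Ha. rewrite cf_tail; auto. pose proof (cf_ge1 (ctl a) (good_tl a Ha)).
  pose proof (INR_14 _ (Ha 0%nat)).
  assert (/5 <= / cf (ctl a)) by (apply inv_le; lra). lra.
Qed.

Lemma cf_approx K : forall a b, good a -> good b -> (forall k, (k <= K)%nat -> a k = b k) ->
  Rabs (cf a - cf b) <= q ^ K.
Proof.
  induction K; intros a b Ha Hb Hab.
  - simpl. pose proof (cf_bnd a Ha). pose proof (cf_bnd b Hb).
    rewrite (Hab 0%nat) in H by lia. apply Rabs_le. lra.
  - rewrite (cf_tail a Ha), (cf_tail b Hb). rewrite (Hab 0%nat) by lia.
    replace (INR (b 0%nat) + / cf (ctl a) - (INR (b 0%nat) + / cf (ctl b)))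
      with (/ cf (ctl a) - / cf (ctl b)) by ring.
    eapply Rle_trans. apply inv_diff; apply cf_ge65; apply good_tl; auto.
    pose proof (IHK (ctl a) (ctl b) (good_tl a Ha) (good_tl b Hb)
      ltac:(intros k Hk; unfold ctl; apply Hab; lia)).
    simpl. pose proof q_bnd. nra.
Qed.

Lemma inv_cf_approx K a b : good a -> good b -> (forall k, (k <= K)%nat -> a k = b k) ->
  Rabs (/ cf a - / cf b) <= q ^ K.
Proof.
  intros. eapply Rle_trans. apply inv_diff1; apply cf_ge1; auto. apply cf_approx; auto.
Qed.


Ltac nmod := zify; rewrite ?Nat2Z.inj_mod in *; Z.div_mod_to_equations; lia.

Lemma mod4_cases k : (k mod 4 = 0 \/ k mod 4 = 1 \/ k mod 4 = 2 \/ k mod 4 = 3)%nat.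
Proof. nmod. Qed.

Lemma good_all4 : good all4.
Proof. intro k. unfold all4. lia. Qed.
Lemma good_s3 : good s3_1312.
Proof. intro k. destruct k. simpl. lia. unfold s3_1312. destruct (mod4_cases k) as [H|[H|[H|H]]]; rewrite H; simpl; lia. Qed.
Lemma good_s1213 : good s1213.
Proof. intro k. unfold s1213. destruct (mod4_cases k) as [H|[H|[H|H]]]; rewrite H; simpl; lia. Qed.
Lemma good_s313 : good s313_4.
Proof. intro k. destruct k as [|[|[|k]]]; simpl; lia. Qed.

Lemma inv_eq x y : x * y = 1 -> / x = y.
Proof. intros H. assert (x <> 0) by (intro; subst; lra).
  apply (Rmult_eq_reg_l x); auto. rewrite Rinv_r; auto. Qed.

Lemma INR1 : INR 1 = 1. Proof. reflexivity. Qed.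
Lemma INR2 : INR 2 = 2. Proof. simpl. ring. Qed.
Lemma INR3 : INR 3 = 3. Proof. simpl. ring. Qed.
Lemma INR4 : INR 4 = 4. Proof. simpl. ring. Qed.

Definition s5 := sqrt 5.
Lemma s5_sq : s5 * s5 = 5.
Proof. unfold s5. apply sqrt_sqrt. lra. Qed.
Lemma s5_pos : 2 < s5 < 3.
Proof. pose proof s5_sq. assert (0 <= s5) by (apply sqrt_pos). nra. Qed.

Lemma cf_all4 : cf all4 = 2 + s5.
Proof.
  pose proof (cf_tail all4 good_all4) as H. change (ctl all4) with all4 in H.
  pose proof (cf_ge1 all4 good_all4). unfold all4 in H at 2. simpl in H.
  set (x := cf all4) in *.
  assert (x * x = 4 * x + 1). { rewrite H at 1. field. lra. }
  pose proof s5_sq. pose proof s5_pos.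
  assert ((x - (2 + s5)) * (x - 2 + s5) = 0) by nra.
  apply Rmult_integral in H4. destruct H4; [lra|].
  assert (x >= 4). { rewrite H. pose proof (inv_bnd x ltac:(lra)). lra. }
  lra.
Qed.

Lemma tl4_s3 : ctl (ctl (ctl (ctl (ctl s3_1312)))) = ctl s3_1312.
Proof. apply functional_extensionality. intro k. unfold ctl. cbv beta iota delta [s3_1312].
  replace (S (S (S (S k))) mod 4)%nat with (k mod 4)%nat by nmod. reflexivity. Qed.

Lemma tl4_s1213 : ctl (ctl (ctl (ctl s1213))) = s1213.
Proof. apply functional_extensionality. intro k. unfold ctl, s1213.
  replace (S (S (S (S k))) mod 4)%nat with (k mod 4)%nat by nmod. reflexivity. Qed.

Lemma good_tlk a : good a -> good (ctl a) /\ good (ctl (ctl a)) /\ good (ctl (ctl (ctl a))) /\ good (ctl (ctl (ctl (ctl a)))).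
Proof. intros. repeat split; repeat apply good_tl; auto. Qed.

Lemma cf_P : cf (ctl s3_1312) = (5 + 4 * s5) / 11.
Proof.
  pose proof (good_tl _ good_s3) as G.
  destruct (good_tlk _ G) as [G1 [G2 [G3 G4]]].
  pose proof (cf_tail _ G) as E0. pose proof (cf_tail _ G1) as E1.
  pose proof (cf_tail _ G2) as E2. pose proof (cf_tail _ G3) as E3.
  rewrite tl4_s3 in E3.
  pose proof (cf_ge1 _ G). pose proof (cf_ge1 _ G1). pose proof (cf_ge1 _ G2). pose proof (cf_ge1 _ G3).
  change (ctl s3_1312 0%nat) with 1%nat in E0.
  change (ctl (ctl s3_1312) 0%nat) with 3%nat in E1.
  change (ctl (ctl (ctl s3_1312)) 0%nat) with 1%nat in E2.
  change (ctl (ctl (ctl (ctl s3_1312))) 0%nat) with 2%nat in E3.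
  simpl INR in E0, E1, E2, E3.
  set (P := cf (ctl s3_1312)) in *.
  set (P1 := cf (ctl (ctl s3_1312))) in *.
  set (P2 := cf (ctl (ctl (ctl s3_1312)))) in *.
  set (P3 := cf (ctl (ctl (ctl (ctl s3_1312))))) in *.
  assert (P3 = (2*P+1)/P) by (rewrite E3; field; lra).
  assert (P2 = (3*P+1)/(2*P+1)) by (rewrite E2, H3; field; lra).
  assert (P1 = (11*P+4)/(3*P+1)) by (rewrite E1, H4; field; lra).
  assert (P * (11*P+4) = 14*P+5) by (rewrite E0 at 1; rewrite H5; field; lra).
  pose proof s5_sq. pose proof s5_pos.
  assert ((P - (5 + 4*s5)/11) * (P - (5 - 4*s5)/11) = 0) by nra.
  apply Rmult_integral in H9. destruct H9; lra.
Qed.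

Lemma cf_Q : cf s1213 = (6 + 4 * s5) / 11.
Proof.
  pose proof good_s1213 as G.
  destruct (good_tlk _ G) as [G1 [G2 [G3 G4]]].
  pose proof (cf_tail _ G) as E0. pose proof (cf_tail _ G1) as E1.
  pose proof (cf_tail _ G2) as E2. pose proof (cf_tail _ G3) as E3.
  rewrite tl4_s1213 in E3.
  pose proof (cf_ge1 _ G). pose proof (cf_ge1 _ G1). pose proof (cf_ge1 _ G2). pose proof (cf_ge1 _ G3).
  change (s1213 0%nat) with 1%nat in E0.
  change (ctl s1213 0%nat) with 2%nat in E1.
  change (ctl (ctl s1213) 0%nat) with 1%nat in E2.
  change (ctl (ctl (ctl s1213)) 0%nat) with 3%nat in E3.
  simpl INR in E0, E1, E2, E3.
  set (P := cf s1213) in *.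
  set (P1 := cf (ctl s1213)) in *.
  set (P2 := cf (ctl (ctl s1213))) in *.
  set (P3 := cf (ctl (ctl (ctl s1213)))) in *.
  assert (P3 = (3*P+1)/P) by (rewrite E3; field; lra).
  assert (P2 = (4*P+1)/(3*P+1)) by (rewrite E2, H3; field; lra).
  assert (P1 = (11*P+3)/(4*P+1)) by (rewrite E1, H4; field; lra).
  assert (P * (11*P+3) = 15*P+4) by (rewrite E0 at 1; rewrite H5; field; lra).
  pose proof s5_sq. pose proof s5_pos.
  assert ((P - (6 + 4*s5)/11) * (P - (6 - 4*s5)/11) = 0) by nra.
  apply Rmult_integral in H9. destruct H9; lra.
Qed.

Lemma cf_s3 : cf s3_1312 = 3 + / ((5 + 4 * s5) / 11).
Proof. rewrite cf_tail by apply good_s3. rewrite cf_P. simpl. lra. Qed.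

Lemma part1 : cf all4 + / cf s3_1312 = 9 / 2.
Proof.
  rewrite cf_all4, cf_s3. pose proof s5_sq. pose proof s5_pos.
  assert (/ ((5 + 4 * s5) / 11) = (4*s5 - 5)/5) by (apply inv_eq; nra).
  rewrite H1.
  assert (/ (3 + (4*s5 - 5)/5) = (10 - 4*s5)/4) by (apply inv_eq; nra).
  rewrite H2. lra.
Qed.

Lemma cf_tl313 : cf (ctl s313_4) = 1 + / (3 + / (2 + s5)).
Proof.
  pose proof (good_tl _ good_s313) as G. destruct (good_tlk _ G) as [G1 [G2 _]].
  rewrite (cf_tail _ G), (cf_tail _ G1).
  change (ctl (ctl (ctl s313_4))) with all4. rewrite cf_all4.
  change (ctl s313_4 0%nat) with 1%nat. change (ctl (ctl s313_4) 0%nat) with 3%nat.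
  rewrite INR1, INR3. reflexivity.
Qed.

Lemma cf_s313 : cf s313_4 = 6 - s5.
Proof.
  rewrite (cf_tail _ good_s313), cf_tl313. change (s313_4 0%nat) with 3%nat. rewrite INR3.
  pose proof s5_sq. pose proof s5_pos.
  assert (/ (2 + s5) = s5 - 2) by (apply inv_eq; nra). rewrite H1.
  assert (/ (3 + (s5 - 2)) = (s5 - 1)/4) by (apply inv_eq; nra). rewrite H2.
  assert (/ (1 + (s5 - 1)/4) = 3 - s5) by (apply inv_eq; nra). rewrite H3.
  lra.
Qed.

Lemma part2 : cf s313_4 + / cf s1213 = 9 / 2.
Proof.
  rewrite cf_s313, cf_Q. pose proof s5_sq. pose proof s5_pos.
  assert (/ ((6 + 4 * s5) / 11) = (4*s5 - 6)/4) by (apply inv_eq; nra).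
  rewrite H1. lra.
Qed.

Lemma ref_a : INR 4 + / cf s3_1312 + / cf all4 = 9/2.
Proof. rewrite <- part1. rewrite (cf_tail all4 good_all4) at 2. change (ctl all4) with all4.
  change (all4 0%nat) with 4%nat. ring. Qed.
Lemma ref_c : INR 3 + / cf s1213 + / cf (ctl s313_4) = 9/2.
Proof. rewrite <- part2. rewrite (cf_tail s313_4 good_s313). change (s313_4 0%nat) with 3%nat. ring. Qed.


Definition goodZ (a : Z -> nat) := forall i, (1 <= a i <= 4)%nat.
Definition fw (a : Z -> nat) (p : Z) : nat -> nat := fun k => a (Z.of_nat k + p)%Z.
Definition bw (a : Z -> nat) (p : Z) : nat -> nat := fun k => a (- Z.of_nat k - 1 + p)%Z.

Lemma good_fw a p : goodZ a -> good (fw a p).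
Proof. intros H k. apply H. Qed.
Lemma good_bw a p : goodZ a -> good (bw a p).
Proof. intros H k. apply H. Qed.

Lemma fw0 a q : fw a q 0%nat = a q.
Proof. reflexivity. Qed.
Lemma fw1 a q : fw a q 1%nat = a (q + 1)%Z.
Proof. unfold fw. f_equal. lia. Qed.
Lemma bw0 a p : bw a p 0%nat = a (p - 1)%Z.
Proof. unfold bw. f_equal. lia. Qed.
Lemma bw1 a p : bw a p 1%nat = a (p - 2)%Z.
Proof. unfold bw. f_equal. lia. Qed.

Lemma lambda_eq a p : lambda0 (shiftZ p a) = cf (fw a p) + / cf (bw a p).
Proof. reflexivity. Qed.

Lemma ctl_fw a p : ctl (fw a p) = fw a (p + 1)%Z.
Proof. apply functional_extensionality. intro k. unfold ctl, fw. f_equal. lia. Qed.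

Lemma lambda_split a p : goodZ a ->
  lambda0 (shiftZ p a) = INR (a p) + / cf (fw a (p + 1)%Z) + / cf (bw a p).
Proof. intros Ha. rewrite lambda_eq. rewrite (cf_tail (fw a p)) by (apply good_fw; auto).
  rewrite ctl_fw. rewrite fw0. reflexivity. Qed.

Lemma inv_cf_le1 b : good b -> 0 < / cf b <= 1.
Proof. intros. apply inv_bnd. apply cf_ge1; auto. Qed.

Lemma inv_cf_4 b : good b -> b 0%nat = 4%nat -> / cf b <= 1/4.
Proof. intros Hb H0. pose proof (cf_bnd b Hb). rewrite H0, INR4 in H.
  replace (1/4) with (/4) by field. apply inv_le; lra. Qed.

Lemma inv_cf_12 b : good b -> b 0%nat = 1%nat -> b 1%nat = 2%nat -> / cf b <= 3/4.
Proof. intros Hb H0 H1. rewrite cf_tail by auto. rewrite H0, INR1.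
  pose proof (cf_bnd (ctl b) (good_tl b Hb)). change (ctl b 0%nat) with (b 1%nat) in H. rewrite H1, INR2 in H.
  assert (/3 <= / cf (ctl b)) by (apply inv_le; lra).
  replace (3/4) with (/ (4/3)) by field. apply inv_le; lra. Qed.

Lemma inv_cf_13 b : good b -> b 0%nat = 1%nat -> b 1%nat = 3%nat -> 3/4 <= / cf b.
Proof. intros Hb H0 H1. rewrite cf_tail by auto. rewrite H0, INR1.
  pose proof (cf_bnd (ctl b) (good_tl b Hb)). change (ctl b 0%nat) with (b 1%nat) in H. rewrite H1, INR3 in H.
  assert (/ cf (ctl b) <= /3) by (apply inv_le; lra).
  pose proof (inv_cf_le1 (ctl b) (good_tl b Hb)).
  replace (3/4) with (/ (4/3)) by field. apply inv_le; lra. Qed.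

Lemma lam_le a p : goodZ a -> lambda0 (shiftZ p a) <= INR (a p) + 2.
Proof. intros Ha. rewrite lambda_split by auto.
  pose proof (inv_cf_le1 _ (good_fw a (p+1)%Z Ha)). pose proof (inv_cf_le1 _ (good_bw a p Ha)). lra. Qed.

Lemma mval_char a M m p0 : (forall p, lambda0 (shiftZ p a) <= M) -> m <= lambda0 (shiftZ p0 a) ->
  exists v, mval a = Finite v /\ m <= v <= M.
Proof.
  intros HM Hm. unfold mval.
  destruct (Lub_Rbar_correct (fun x => exists n : Z, x = lambda0 (shiftZ n a))) as [Hub Hlub].
  set (l := Lub_Rbar _) in *.
  assert (H1 : Rbar_le (lambda0 (shiftZ p0 a)) l) by (apply Hub; eauto).
  assert (H2 : Rbar_le l M). { apply Hlub. intros x [n ->]. simpl. apply HM. }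
  destruct l as [r| |]; simpl in H1, H2; try contradiction.
  exists r. split; auto. lra.
Qed.

Definition p1312 (m : Z) : nat := nth (Z.to_nat (m mod 4)) [1;3;1;2]%nat 1%nat.

Lemma p1312_e m c : (m mod 4 = Z.of_nat c)%Z -> p1312 m = nth c [1;3;1;2]%nat 1%nat.
Proof. intros H. unfold p1312. rewrite H, Nat2Z.id. reflexivity. Qed.

Ltac p1312s := first [ rewrite (p1312_e _ 0) by nmod | rewrite (p1312_e _ 1) by nmod
  | rewrite (p1312_e _ 2) by nmod | rewrite (p1312_e _ 3) by nmod ].

Lemma good_p1312 m : (1 <= p1312 m <= 4)%nat.
Proof. unfold p1312. destruct (Z.to_nat (m mod 4)) as [|[|[|[|n]]]]; simpl; try lia; destruct n; simpl; lia. Qed.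

Lemma seq43_neg i : (i < 0)%Z -> seq43 i = 4%nat.
Proof. intros. unfold seq43. destruct (Z.ltb_spec i 0); lia. Qed.
Lemma seq43_0 : seq43 0 = 3%nat.
Proof. reflexivity. Qed.
Lemma seq43_pos i : (0 < i)%Z -> seq43 i = p1312 (i - 1).
Proof. intros. unfold seq43. destruct (Z.ltb_spec i 0); try lia.
  destruct (Z.eqb_spec i 0); try lia. reflexivity. Qed.

Lemma goodZ_seq43 : goodZ seq43.
Proof. intro i. destruct (Z.ltb_spec i 0). rewrite seq43_neg; lia.
  destruct (Z.eqb_spec i 0). subst. rewrite seq43_0. lia.
  rewrite seq43_pos by lia. apply good_p1312. Qed.

Lemma fw43_0 : fw seq43 0 = s3_1312.
Proof. apply functional_extensionality. intro k. destruct k. reflexivity.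
  unfold fw. rewrite seq43_pos by lia. cbv beta iota delta [s3_1312].
  destruct (mod4_cases k) as [Hk|[Hk|[Hk|Hk]]]; rewrite Hk; p1312s; reflexivity. Qed.

Lemma bw43_m1 : bw seq43 (-1) = all4.
Proof. apply functional_extensionality. intro k. unfold bw. rewrite seq43_neg by lia. reflexivity. Qed.

Lemma fw43_s1213 p : (1 <= p)%Z -> ((p - 1) mod 4 = 1)%Z -> fw seq43 (p + 1) = s1213.
Proof. intros H1 H2. apply functional_extensionality. intro k.
  unfold fw. rewrite seq43_pos by lia. unfold s1213.
  destruct (mod4_cases k) as [Hk|[Hk|[Hk|Hk]]]; rewrite Hk; p1312s; reflexivity. Qed.

Lemma bw43_2 : bw seq43 2 = ctl s313_4.
Proof. apply functional_extensionality. intro k. destruct k as [|[|k]]. reflexivity. reflexivity.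
  unfold bw. rewrite seq43_neg by lia. reflexivity. Qed.

Lemma seq43_le p : lambda0 (shiftZ p seq43) <= 9/2.
Proof.
  pose proof goodZ_seq43 as G.
  rewrite lambda_split by auto.
  pose proof (inv_cf_le1 _ (good_fw seq43 (p+1)%Z G)). pose proof (inv_cf_le1 _ (good_bw seq43 p G)).
  destruct (Z.lt_trichotomy p (-1)) as [Hp|[Hp|Hp]].
  - rewrite seq43_neg by lia. rewrite INR4.
    assert (/ cf (fw seq43 (p + 1)) <= 1/4). { apply inv_cf_4. apply good_fw; auto. rewrite fw0. apply seq43_neg. lia. }
    assert (/ cf (bw seq43 p) <= 1/4). { apply inv_cf_4. apply good_bw; auto. rewrite bw0. apply seq43_neg. lia. }
    lra.
  - subst. rewrite seq43_neg by lia. simpl (-1 + 1)%Z. rewrite fw43_0, bw43_m1, ref_a. lra.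
  - destruct (Z.eqb_spec p 0) as [->|Hp0].
    + rewrite seq43_0, INR3.
      assert (/ cf (bw seq43 0) <= 1/4). { apply inv_cf_4. apply good_bw; auto. rewrite bw0. apply seq43_neg. lia. }
      lra.
    + rewrite seq43_pos by lia.
      assert (Hm : ((p-1) mod 4 = 0 \/ (p-1) mod 4 = 1 \/ (p-1) mod 4 = 2 \/ (p-1) mod 4 = 3)%Z) by (Z.div_mod_to_equations; lia).
      destruct Hm as [Hm|[Hm|[Hm|Hm]]]; try (p1312s; simpl nth; rewrite ?INR1, ?INR2; lra).
      rewrite (p1312_e _ 1) by (rewrite Hm; reflexivity). simpl nth. rewrite INR3.
      rewrite fw43_s1213 by lia.
      destruct (Z.eqb_spec p 2) as [->|Hp2].
      * rewrite bw43_2. pose proof ref_c. rewrite INR3 in H1. lra.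
      * assert (p >= 6)%Z by (Z.div_mod_to_equations; lia).
        assert (/ cf (bw seq43 p) <= 3/4).
        { apply inv_cf_12. apply good_bw; auto.
          rewrite bw0, seq43_pos by lia. p1312s. reflexivity.
          rewrite bw1, seq43_pos by lia. p1312s. reflexivity. }
        assert (3/4 <= / cf (ctl s313_4)) by (apply inv_cf_13; [apply good_tl, good_s313 | reflexivity | reflexivity]).
        pose proof ref_c. rewrite INR3 in *. lra.
Qed.

Lemma seq43_m1 : lambda0 (shiftZ (-1) seq43) = 9/2.
Proof. rewrite lambda_split by apply goodZ_seq43. rewrite seq43_neg by lia.
  simpl (-1 + 1)%Z. rewrite fw43_0, bw43_m1, INR4, <- ref_a, INR4. ring. Qed.

Lemma part3 : mval seq43 = Finite (9/2).
Proof.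
  destruct (mval_char seq43 (9/2) (9/2) (-1) seq43_le ltac:(rewrite seq43_m1; lra)) as [v [H1 H2]].
  rewrite H1. f_equal. lra.
Qed.


Definition Lb (n : Z) : Z := (5*n+5)%Z.
Definition p1313 (m : Z) : nat := nth (Z.to_nat m) [1;3;1;3]%nat 1%nat.
Definition bd (n r : Z) : nat :=
  if (r <? n)%Z then 4%nat else if (r =? n)%Z then 3%nat
  else if (r <? 5*n+1)%Z then p1312 (r - n - 1) else p1313 (r - 5*n - 1).
Definition W (n1 n2 n3 t : Z) : nat :=
  if (t <? 0)%Z then bd n1 (t + Lb n1) else if (t <? Lb n2)%Z then bd n2 t else bd n3 (t - Lb n2).

Lemma p1313_e m c : m = Z.of_nat c -> p1313 m = nth c [1;3;1;3]%nat 1%nat.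
Proof. intros ->. unfold p1313. rewrite Nat2Z.id. reflexivity. Qed.

Lemma good_p1313 m : (1 <= p1313 m <= 4)%nat.
Proof. unfold p1313. destruct (Z.to_nat m) as [|[|[|[|n]]]]; simpl; try lia; destruct n; simpl; lia. Qed.

Lemma good_bd n r : (1 <= bd n r <= 4)%nat.
Proof. unfold bd. destruct (r <? n)%Z. lia. destruct (r =? n)%Z. lia.
  destruct (r <? 5*n+1)%Z. apply good_p1312. apply good_p1313. Qed.

Lemma good_W n1 n2 n3 t : (1 <= W n1 n2 n3 t <= 4)%nat.
Proof. unfold W. destruct (t <? 0)%Z. apply good_bd. destruct (t <? Lb n2)%Z; apply good_bd. Qed.

Ltac zsplit := repeat match goal with
  | |- context [Z.ltb ?x ?y] => destruct (Z.ltb_spec x y)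
  | |- context [Z.eqb ?x ?y] => destruct (Z.eqb_spec x y) end.

Section WL.
Variables n1 n2 n3 : Z.
Hypothesis H1 : (1 <= n1)%Z.
Hypothesis H2 : (1 <= n2)%Z.
Hypothesis H3 : (1 <= n3)%Z.

Lemma W4 t : (0 <= t < n2)%Z -> W n1 n2 n3 t = 4%nat.
Proof. intros. unfold W, bd, Lb. zsplit; lia. Qed.
Lemma W3 t : t = n2 -> W n1 n2 n3 t = 3%nat.
Proof. intros. unfold W, bd, Lb. zsplit; lia. Qed.
Lemma W12 t : (n2 < t <= 5*n2)%Z -> W n1 n2 n3 t = p1312 (t - n2 - 1).
Proof. intros. unfold W, bd, Lb. zsplit; try lia; try reflexivity. Qed.
Lemma W13 t : (5*n2 < t < Lb n2)%Z -> W n1 n2 n3 t = p1313 (t - 5*n2 - 1).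
Proof. intros. unfold W, bd, Lb in *. zsplit; try lia; try reflexivity. Qed.
Lemma WR4 t : (Lb n2 <= t < Lb n2 + n3)%Z -> W n1 n2 n3 t = 4%nat.
Proof. intros. unfold W, bd, Lb in *. zsplit; lia. Qed.
Lemma WL13 t : (-4 <= t < 0)%Z -> W n1 n2 n3 t = p1313 (t + 4).
Proof. intros. unfold W, bd, Lb in *. zsplit; try lia; f_equal; lia. Qed.
Lemma WL12 t : (-4*n1-4 <= t < -4)%Z -> W n1 n2 n3 t = p1312 (t + 4*n1 + 4).
Proof. intros. unfold W, bd, Lb in *. zsplit; try lia; f_equal; lia. Qed.
End WL.

Lemma junction d F B R1 R2 K : good F -> good B -> good R1 -> good R2 ->
  (forall k, (k <= K)%nat -> F k = R1 k) -> (forall k, (k <= K)%nat -> B k = R2 k) ->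
  Rabs ((d + / cf F + / cf B) - (d + / cf R1 + / cf R2)) <= 2 * q ^ K.
Proof.
  intros. replace ((d + / cf F + / cf B) - (d + / cf R1 + / cf R2))
    with ((/ cf F - / cf R1) + (/ cf B - / cf R2)) by ring.
  eapply Rle_trans. apply Rabs_triang.
  pose proof (inv_cf_approx K F R1 H H1 H3). pose proof (inv_cf_approx K B R2 H0 H2 H4). lra.
Qed.

Ltac pat_solve := match goal with |- context [ (?Y mod 4)%nat ] =>
  let Hk := fresh "Hk" in
  destruct (mod4_cases Y) as [Hk|[Hk|[Hk|Hk]]]; rewrite Hk; p1312s; reflexivity end.

Section Window.
Variable a : Z -> nat.
Variables n1 n2 n3 : Z.
Variable K : nat.
Hypothesis Ha : goodZ a.
Hypothesis Hn1 : (Z.of_nat K + 2 <= n1)%Z.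
Hypothesis Hn2 : (Z.of_nat K + 2 <= n2)%Z.
Hypothesis Hn3 : (Z.of_nat K + 2 <= n3)%Z.
Hypothesis HW : forall t, (- Lb n1 <= t < Lb n2 + Lb n3)%Z -> a t = W n1 n2 n3 t.

Lemma aW t : (- Lb n1 <= t < Lb n2 + Lb n3)%Z -> a t = W n1 n2 n3 t.
Proof. apply HW. Qed.

Ltac aw := rewrite aW by (unfold Lb; lia).

Lemma junc_b : Rabs (lambda0 (shiftZ 0 a) - 9/2) <= 2 * q ^ K.
Proof.
  rewrite lambda_split by auto. aw. rewrite W4 by lia.
  replace (9/2) with (INR 4 + / cf all4 + / cf s3_1312) by (rewrite <- ref_a; ring).
  apply junction; auto using good_fw, good_bw, good_all4, good_s3.
  - intros k Hk. unfold fw. aw. rewrite W4 by lia. reflexivity.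
  - intros k Hk. unfold bw. aw.
    destruct k as [|[|[|[|k]]]].
    + rewrite WL13 by lia. reflexivity.
    + rewrite WL13 by lia. reflexivity.
    + rewrite WL13 by lia. reflexivity.
    + rewrite WL13 by lia. reflexivity.
    + rewrite WL12 by lia. cbv beta iota delta [s3_1312]. pat_solve.
Qed.

Lemma junc_a : Rabs (lambda0 (shiftZ (n2 - 1) a) - 9/2) <= 2 * q ^ K.
Proof.
  rewrite lambda_split by auto. aw. rewrite W4 by lia.
  replace (n2 - 1 + 1)%Z with n2 by ring.
  rewrite <- ref_a.
  apply junction; auto using good_fw, good_bw, good_all4, good_s3.
  - intros k Hk. unfold fw. aw. destruct k as [|k].
    + rewrite W3 by lia. reflexivity.
    + rewrite W12 by lia. cbv beta iota delta [s3_1312]. pat_solve.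
  - intros k Hk. unfold bw. aw. rewrite W4 by lia. reflexivity.
Qed.

Lemma junc_c : Rabs (lambda0 (shiftZ (n2 + 2) a) - 9/2) <= 2 * q ^ K.
Proof.
  rewrite lambda_split by auto. aw. rewrite W12 by lia.
  rewrite (p1312_e _ 1) by nmod. simpl nth.
  rewrite <- ref_c.
  apply junction; auto using good_fw, good_bw, good_s1213, good_tl, good_s313.
  - intros k Hk. unfold fw. aw. rewrite W12 by lia. unfold s1213. pat_solve.
  - intros k Hk. unfold bw. aw. destruct k as [|[|k]].
    + rewrite W12 by lia. rewrite (p1312_e _ 0) by nmod. reflexivity.
    + rewrite W3 by lia. reflexivity.
    + rewrite W4 by lia. reflexivity.
Qed.

Lemma junc_d : Rabs (lambda0 (shiftZ (5 * n2 + 2) a) - 9/2) <= 2 * q ^ K.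
Proof.
  rewrite lambda_split by auto. aw. rewrite W13 by (unfold Lb; lia).
  rewrite (p1313_e _ 1) by lia. simpl nth.
  replace (9/2) with (INR 3 + / cf (ctl s313_4) + / cf s1213) by (rewrite <- ref_c; ring).
  apply junction; auto using good_fw, good_bw, good_s1213, good_tl, good_s313.
  - intros k Hk. unfold fw. aw. destruct k as [|[|k]].
    + rewrite W13 by (unfold Lb; lia). rewrite (p1313_e _ 2) by lia. reflexivity.
    + rewrite W13 by (unfold Lb; lia). rewrite (p1313_e _ 3) by lia. reflexivity.
    + rewrite WR4 by (unfold Lb; lia). reflexivity.
  - intros k Hk. unfold bw. aw. destruct k as [|k].
    + rewrite W13 by (unfold Lb; lia). rewrite (p1313_e _ 0) by lia. reflexivity.
    + rewrite W12 by lia. unfold s1213. pat_solve.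
Qed.

Lemma window_upper j : (0 <= j < Lb n2)%Z -> lambda0 (shiftZ j a) <= 9/2 + 2 * q ^ K.
Proof.
  intros Hj.
  assert (Hq : 0 <= q ^ K) by (apply pow_le; unfold q; lra).
  assert (C : (j = 0 \/ (1 <= j <= n2 - 2) \/ j = n2 - 1 \/ j = n2 \/ (n2 < j <= 5*n2) \/ (5*n2 < j < Lb n2))%Z)
    by (unfold Lb in *; lia).
  destruct C as [C|[C|[C|[C|[C|C]]]]].
  - subst. pose proof junc_b. apply Rabs_le_between in H. lra.
  - rewrite lambda_split by auto. aw. rewrite W4 by lia. rewrite INR4.
    assert (/ cf (fw a (j + 1)) <= 1/4). { apply inv_cf_4. apply good_fw; auto. rewrite fw0. aw. apply W4; lia. }
    assert (/ cf (bw a j) <= 1/4). { apply inv_cf_4. apply good_bw; auto. rewrite bw0. aw. apply W4; lia. }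
    lra.
  - subst. pose proof junc_a. apply Rabs_le_between in H. lra.
  - rewrite lambda_split by auto. aw. rewrite W3 by lia. rewrite INR3.
    pose proof (inv_cf_le1 _ (good_fw a (j+1)%Z Ha)).
    assert (/ cf (bw a j) <= 1/4). { apply inv_cf_4. apply good_bw; auto. rewrite bw0. aw. apply W4; lia. }
    lra.
  - assert (Hm : ((j-n2-1) mod 4 = 0 \/ (j-n2-1) mod 4 = 1 \/ (j-n2-1) mod 4 = 2 \/ (j-n2-1) mod 4 = 3)%Z)
      by (Z.div_mod_to_equations; lia).
    assert (G : lambda0 (shiftZ j a) <= INR (a j) + 2) by (apply lam_le; auto).
    destruct Hm as [Hm|[Hm|[Hm|Hm]]];
      try (rewrite aW in G by (unfold Lb; lia); rewrite W12 in G by lia; rewrite (p1312_e _ 0) in G by nmod; simpl nth in G; rewrite INR1 in G; lra);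
      try (rewrite aW in G by (unfold Lb; lia); rewrite W12 in G by lia; rewrite (p1312_e _ 2) in G by nmod; simpl nth in G; rewrite INR1 in G; lra);
      try (rewrite aW in G by (unfold Lb; lia); rewrite W12 in G by lia; rewrite (p1312_e _ 3) in G by nmod; simpl nth in G; rewrite INR2 in G; lra).
    destruct (Z.eqb_spec j (n2 + 2)) as [->|Hj2].
    + pose proof junc_c. apply Rabs_le_between in H. lra.
    + assert (j - n2 - 1 >= 5)%Z by (Z.div_mod_to_equations; lia).
      assert (j + 2 <= 5 * n2)%Z by (Z.div_mod_to_equations; lia).
      rewrite lambda_split by auto. aw. rewrite W12 by lia.
      rewrite (p1312_e _ 1) by nmod. simpl nth. rewrite INR3.
      assert (/ cf (fw a (j + 1)) <= 3/4).
      { apply inv_cf_12. apply good_fw; auto.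
        rewrite fw0. aw. rewrite W12 by lia. p1312s. reflexivity.
        rewrite fw1. aw. rewrite W12 by lia. p1312s. reflexivity. }
      assert (/ cf (bw a j) <= 3/4).
      { apply inv_cf_12. apply good_bw; auto.
        rewrite bw0. aw. rewrite W12 by lia. p1312s. reflexivity.
        rewrite bw1. aw. rewrite W12 by lia. p1312s. reflexivity. }
      lra.
  - unfold Lb in C.
    assert (U : (j = 5*n2+1 \/ j = 5*n2+2 \/ j = 5*n2+3 \/ j = 5*n2+4)%Z) by lia.
    assert (G : lambda0 (shiftZ j a) <= INR (a j) + 2) by (apply lam_le; auto).
    destruct U as [U|[U|[U|U]]].
    + rewrite aW in G by (unfold Lb; lia). rewrite W13 in G by (unfold Lb; lia). rewrite (p1313_e _ 0) in G by lia. simpl nth in G. rewrite INR1 in G. lra.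
    + subst. pose proof junc_d. apply Rabs_le_between in H. lra.
    + rewrite aW in G by (unfold Lb; lia). rewrite W13 in G by (unfold Lb; lia). rewrite (p1313_e _ 2) in G by lia. simpl nth in G. rewrite INR1 in G. lra.
    + rewrite lambda_split by auto. aw. rewrite W13 by (unfold Lb; lia).
      rewrite (p1313_e _ 3) by lia. simpl nth. rewrite INR3.
      pose proof (inv_cf_le1 _ (good_bw a j Ha)).
      assert (/ cf (fw a (j + 1)) <= 1/4). { apply inv_cf_4. apply good_fw; auto. rewrite fw0. aw. apply WR4; unfold Lb; lia. }
      lra.
Qed.

Lemma window_lower : 9/2 - 2 * q ^ K <= lambda0 (shiftZ (n2 + 2) a).
Proof. pose proof junc_c. apply Rabs_le_between in H. lra. Qed.

End Window.


Lemma nth_rep_lt (x d : nat) m i : (i < m)%nat -> nth i (repeat x m) d = x.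
Proof. revert i. induction m; intros i Hi. lia. destruct i; simpl; auto. apply IHm. lia. Qed.

Lemma length_concat_rep n : length (concat (repeat [1;3;1;2]%nat n)) = (4 * n)%nat.
Proof. induction n; simpl; auto. rewrite IHn. lia. Qed.

Lemma nth_concat_rep n i : (i < 4 * n)%nat ->
  nth i (concat (repeat [1;3;1;2]%nat n)) 1%nat = nth (i mod 4) [1;3;1;2]%nat 1%nat.
Proof.
  revert i. induction n; intros i Hi. lia. change (concat (repeat [1;3;1;2]%nat (S n))) with ([1;3;1;2]%nat ++ concat (repeat [1;3;1;2]%nat n)).
  destruct (Nat.ltb_spec i 4).
  - rewrite app_nth1 by (simpl; lia). rewrite Nat.mod_small by lia. reflexivity.
  - rewrite app_nth2 by (simpl; lia). simpl length. rewrite IHn by lia.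
    f_equal. nmod.
Qed.

Lemma length_block n : length (block n) = (5 * n + 5)%nat.
Proof. unfold block. rewrite !length_app, repeat_length, length_concat_rep. simpl. lia. Qed.

Lemma nth_block n r : (r < 5 * n + 5)%nat -> nth r (block n) 1%nat = bd (Z.of_nat n) (Z.of_nat r).
Proof.
  intros Hr. unfold block, bd.
  destruct (Nat.ltb_spec r n).
  - rewrite app_nth1 by (rewrite repeat_length; lia). rewrite nth_rep_lt by lia.
    zsplit; lia.
  - rewrite app_nth2 by (rewrite repeat_length; lia). rewrite repeat_length.
    destruct (Nat.eqb_spec r n).
    + subst. rewrite Nat.sub_diag. simpl. zsplit; lia.
    + replace (r - n)%nat with (S (r - n - 1)) by lia. simpl nth.
      destruct (Nat.ltb_spec (r - n - 1) (4 * n)).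
      * rewrite app_nth1 by (rewrite length_concat_rep; lia). rewrite nth_concat_rep by lia.
        zsplit; try lia. unfold p1312.
        replace (Z.of_nat r - Z.of_nat n - 1)%Z with (Z.of_nat (r - n - 1)) by lia.
        change 4%Z with (Z.of_nat 4). rewrite <- Nat2Z.inj_mod, Nat2Z.id. reflexivity.
      * rewrite app_nth2 by (rewrite length_concat_rep; lia). rewrite length_concat_rep.
        zsplit; try lia. unfold p1313.
        replace (Z.of_nat r - 5 * Z.of_nat n - 1)%Z with (Z.of_nat (r - n - 1 - 4 * n)) by lia.
        rewrite Nat2Z.id. reflexivity.
Qed.

Lemma per_eq n i : periodic (block n) i = bd (Z.of_nat n) (i mod Lb (Z.of_nat n)).
Proof.
  unfold periodic. rewrite length_block.
  replace (Z.of_nat (5 * n + 5)) with (Lb (Z.of_nat n)) by (unfold Lb; lia).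
  assert (H := Z.mod_pos_bound i (Lb (Z.of_nat n)) ltac:(unfold Lb; lia)).
  rewrite nth_block by (unfold Lb in *; lia). rewrite Z2Nat.id by lia. reflexivity.
Qed.

Lemma goodZ_per n : goodZ (periodic (block n)).
Proof. intro i. rewrite per_eq. apply good_bd. Qed.

Lemma shift_trans (a : Z -> nat) s j : shiftZ (s + j) a = shiftZ j (fun z => a (s + z)%Z).
Proof. apply functional_extensionality. intro i. unfold shiftZ. f_equal. lia. Qed.

Lemma goodZ_trans a s : goodZ a -> goodZ (fun z => a (s + z)%Z).
Proof. intros H i. apply H. Qed.

Section Per.
Variable n : nat.
Let nz := Z.of_nat n.
Let L := Lb nz.

Lemma per_W s t : (s mod L = 0)%Z -> (- L <= t < L + L)%Z ->
  periodic (block n) (s + t) = W nz nz nz t.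
Proof.
  intros Hs Ht. rewrite per_eq. fold nz L.
  assert (HL : (0 < L)%Z) by (unfold L, Lb, nz; lia).
  assert (E : ((s + t) mod L = t mod L)%Z).
  { rewrite Z.add_mod by lia. rewrite Hs. rewrite Z.add_0_l. apply Z.mod_mod. lia. }
  rewrite E. unfold W. fold L. zsplit.
  - rewrite <- (Z.mod_unique t L (-1) (t + L)) by lia. reflexivity.
  - rewrite <- (Z.mod_unique t L 0 t) by lia. reflexivity.
  - rewrite <- (Z.mod_unique t L 1 (t - L)) by lia. reflexivity.
Qed.

Lemma per_window p : (2 <= n)%nat ->
  lambda0 (shiftZ p (periodic (block n))) <= 9/2 + 2 * q ^ (n - 2).
Proof.
  intros Hn.
  assert (HL : (0 < L)%Z) by (unfold L, Lb, nz; lia).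
  set (s := (p - p mod L)%Z). set (j := (p mod L)%Z).
  replace p with (s + j)%Z by (unfold s, j; ring).
  rewrite shift_trans.
  assert (Hs : (s mod L = 0)%Z).
  { unfold s. rewrite Zminus_mod. rewrite Z.mod_mod by lia. rewrite Z.sub_diag. reflexivity. }
  assert (HW : forall t, (- Lb nz <= t < Lb nz + Lb nz)%Z -> periodic (block n) (s + t) = W nz nz nz t).
  { intros t Ht. apply per_W; auto. }
  assert (Hj : (0 <= j < Lb nz)%Z) by (apply Z.mod_pos_bound; auto).
  exact (window_upper _ nz nz nz (n - 2) (goodZ_trans _ s (goodZ_per n))
    ltac:(unfold nz; lia) ltac:(unfold nz; lia) ltac:(unfold nz; lia) HW j Hj).
Qed.

Lemma per_lower : (2 <= n)%nat ->
  9/2 - 2 * q ^ (n - 2) <= lambda0 (shiftZ (nz + 2) (periodic (block n))).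
Proof.
  intros Hn.
  replace (nz + 2)%Z with (0 + (nz + 2))%Z by ring.
  rewrite shift_trans.
  assert (HW : forall t, (- Lb nz <= t < Lb nz + Lb nz)%Z -> periodic (block n) (0 + t) = W nz nz nz t).
  { intros t Ht. apply per_W; auto. }
  exact (window_lower _ nz nz nz (n - 2) (goodZ_trans _ 0 (goodZ_per n))
    ltac:(unfold nz; lia) ltac:(unfold nz; lia) ltac:(unfold nz; lia) HW).
Qed.
End Per.

Lemma lam_le6 a p : goodZ a -> lambda0 (shiftZ p a) <= 6.
Proof. intros Ha. eapply Rle_trans. apply lam_le; auto.
  pose proof (INR_14 _ (Ha p)). lra. Qed.

Lemma part4 : exists v : nat -> R,
  (forall n, mval (periodic (block n)) = Finite (v n)) /\ is_lim_seq v (9 / 2).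
Proof.
  exists (fun n => real (mval (periodic (block n)))). split.
  - intros n. destruct (mval_char (periodic (block n)) 6 (lambda0 (shiftZ 0 (periodic (block n)))) 0
      (fun p => lam_le6 _ p (goodZ_per n)) (Rle_refl _)) as [v [Hv _]].
    rewrite Hv. reflexivity.
  - apply (is_lim_seq_incr_n _ 2).
    assert (Hg : is_lim_seq (fun n => 2 * q ^ n) 0).
    { replace (Finite 0) with (Rbar_mult 2 0) by (simpl; f_equal; ring).
      apply is_lim_seq_scal_l, is_lim_seq_geom. rewrite Rabs_pos_eq; unfold q; lra. }
    apply (is_lim_seq_le_le (fun n => 9/2 - 2 * q ^ n) _ (fun n => 9/2 + 2 * q ^ n)).
    + intros n.
      destruct (mval_char (periodic (block (n + 2))) (9/2 + 2 * q ^ (n + 2 - 2))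
        (9/2 - 2 * q ^ (n + 2 - 2)) (Z.of_nat (n+2) + 2)
        (fun p => per_window (n+2) p ltac:(lia)) (per_lower (n+2) ltac:(lia))) as [v [Hv Hb]].
      rewrite Hv. simpl. replace (n + 2 - 2)%nat with n in Hb by lia. lra.
    + assert (E : is_lim_seq (fun n => 9/2 - 2 * q ^ n) (9/2 - 0))
        by (apply is_lim_seq_minus'; [apply is_lim_seq_const | auto]).
      rewrite Rminus_0_r in E. exact E.
    + assert (E : is_lim_seq (fun n => 9/2 + 2 * q ^ n) (9/2 + 0))
        by (apply is_lim_seq_plus'; [apply is_lim_seq_const | auto]).
      rewrite Rplus_0_r in E. exact E.
Qed.


Definition Ln (b : nat) : nat := (5 * (b + 2) + 5)%nat.
Fixpoint walk (f b i : nat) : nat :=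
  match f with
  | O => 1%nat
  | S f' => if (i <? Ln b)%nat then bd (Z.of_nat (b + 2)) (Z.of_nat i) else walk f' (S b) (i - Ln b)
  end.
Fixpoint stf (b0 b : nat) : nat :=
  match b with O => O | S b' => (Ln b0 + stf (S b0) b')%nat end.
Definition st (b : nat) : nat := stf 0 b.
Definition lag (z : Z) : nat := if (z <? 0)%Z then 4%nat else walk (S (Z.to_nat z)) 0 (Z.to_nat z).

Lemma walk_good f : forall b i, (1 <= walk f b i <= 4)%nat.
Proof. induction f; intros; simpl. lia. destruct (i <? Ln b)%nat. apply good_bd. apply IHf. Qed.

Lemma goodZ_lag : goodZ lag.
Proof. intro z. unfold lag. destruct (z <? 0)%Z. lia. apply walk_good. Qed.

Lemma stf_S b : forall b0, stf b0 (S b) = (stf b0 b + Ln (b0 + b))%nat.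
Proof. induction b; intros b0. change (stf b0 1) with (Ln b0 + 0)%nat. change (stf b0 0) with 0%nat. rewrite !Nat.add_0_r. reflexivity.
  change (stf b0 (S (S b))) with (Ln b0 + stf (S b0) (S b))%nat. rewrite IHb.
  change (stf b0 (S b)) with (Ln b0 + stf (S b0) b)%nat.
  replace (S b0 + b)%nat with (b0 + S b)%nat by lia. lia. Qed.

Lemma st_S b : st (S b) = (st b + Ln b)%nat.
Proof. unfold st. rewrite stf_S. reflexivity. Qed.

Lemma st_ge b : (b <= st b)%nat.
Proof. induction b. unfold st; simpl; lia. rewrite st_S. unfold Ln. lia. Qed.

Lemma st_mono m n : (m <= n)%nat -> (st m <= st n)%nat.
Proof. induction 1. lia. rewrite st_S. lia. Qed.

Lemma walk_st b : forall b0 f t, (t < Ln (b0 + b))%nat -> (stf b0 b + t < f)%nat ->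
  walk f b0 (stf b0 b + t) = bd (Z.of_nat (b0 + b + 2)) (Z.of_nat t).
Proof.
  induction b; intros b0 f t Ht Hf.
  - destruct f as [|f]; [lia|]. simpl stf. simpl walk. rewrite Nat.add_0_r in *.
    destruct (Nat.ltb_spec t (Ln b0)); [|lia]. reflexivity.
  - destruct f as [|f]; [lia|]. change (stf b0 (S b)) with (Ln b0 + stf (S b0) b)%nat.
    simpl walk. destruct (Nat.ltb_spec (Ln b0 + stf (S b0) b + t) (Ln b0)); [lia|].
    replace (Ln b0 + stf (S b0) b + t - Ln b0)%nat with (stf (S b0) b + t)%nat by lia.
    rewrite IHb. f_equal. f_equal. lia.
    replace (S b0 + b)%nat with (b0 + S b)%nat by lia. auto. change (stf b0 (S b)) with (Ln b0 + stf (S b0) b)%nat in Hf. unfold Ln in Hf. lia.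
Qed.

Lemma lag_block b t : (t < Ln b)%nat -> lag (Z.of_nat (st b + t)) = bd (Z.of_nat (b + 2)) (Z.of_nat t).
Proof.
  intros Ht. unfold lag. destruct (Z.ltb_spec (Z.of_nat (st b + t)) 0); [lia|].
  rewrite Nat2Z.id. unfold st. apply walk_st; simpl; lia.
Qed.

Lemma find_block n : exists b, (st b <= n < st (S b))%nat.
Proof.
  induction n.
  - exists 0%nat. rewrite st_S. unfold st, Ln. simpl. lia.
  - destruct IHn as [b Hb]. destruct (Nat.eq_dec (S n) (st (S b))).
    + exists (S b). rewrite (st_S (S b)). unfold Ln. lia.
    + exists b. lia.
Qed.

Section Lag.
Variable b : nat.
Hypothesis Hb : (1 <= b)%nat.
Let s := Z.of_nat (st b).
Let n1 := Z.of_nat (b + 1).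
Let n2 := Z.of_nat (b + 2).
Let n3 := Z.of_nat (b + 3).

Lemma lag_W t : (- Lb n1 <= t < Lb n2 + Lb n3)%Z -> lag (s + t) = W n1 n2 n3 t.
Proof.
  intros Ht. destruct b as [|b']; [lia|].
  assert (E1 : st (S b') = (st b' + Ln b')%nat) by apply st_S.
  assert (E2 : st (S (S b')) = (st (S b') + Ln (S b'))%nat) by apply st_S.
  unfold s, n1, n2, n3, Lb, Ln in *. unfold W, Lb.
  destruct (Z.ltb_spec t 0).
  - replace (Z.of_nat (st (S b')) + t)%Z with (Z.of_nat (st b' + Z.to_nat (t + (5 * Z.of_nat (S b' + 1) + 5)))) by lia.
    rewrite lag_block by (unfold Ln; lia). rewrite Z2Nat.id by lia. f_equal. lia.
  - destruct (Z.ltb_spec t (5 * Z.of_nat (S b' + 2) + 5)).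
    + replace (Z.of_nat (st (S b')) + t)%Z with (Z.of_nat (st (S b') + Z.to_nat t)) by lia.
      rewrite lag_block by (unfold Ln; lia). rewrite Z2Nat.id by lia. reflexivity.
    + replace (Z.of_nat (st (S b')) + t)%Z with (Z.of_nat (st (S (S b')) + Z.to_nat (t - (5 * Z.of_nat (S b' + 2) + 5)))) by lia.
      rewrite lag_block by (unfold Ln; lia). rewrite Z2Nat.id by lia. f_equal. lia.
Qed.

Lemma lag_upper j : (j < Ln b)%nat ->
  lambda0 (shiftZ (Z.of_nat (st b + j)) lag) <= 9/2 + 2 * q ^ (b - 1).
Proof.
  intros Hj. replace (Z.of_nat (st b + j)) with (s + Z.of_nat j)%Z by (unfold s; lia).
  rewrite shift_trans.
  assert (HW : forall t, (- Lb n1 <= t < Lb n2 + Lb n3)%Z -> lag (s + t) = W n1 n2 n3 t) by apply lag_W.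
  assert (Hj' : (0 <= Z.of_nat j < Lb n2)%Z) by (unfold n2, Lb, Ln in *; lia).
  exact (window_upper _ n1 n2 n3 (b - 1) (goodZ_trans _ s goodZ_lag)
    ltac:(unfold n1; lia) ltac:(unfold n2; lia) ltac:(unfold n3; lia) HW _ Hj').
Qed.

Lemma lag_lower :
  9/2 - 2 * q ^ (b - 1) <= lambda0 (shiftZ (Z.of_nat (st b + (b + 2 + 2))) lag).
Proof.
  replace (Z.of_nat (st b + (b + 2 + 2))) with (s + (n2 + 2))%Z by (unfold s, n2; lia).
  rewrite shift_trans.
  assert (HW : forall t, (- Lb n1 <= t < Lb n2 + Lb n3)%Z -> lag (s + t) = W n1 n2 n3 t) by apply lag_W.
  exact (window_lower _ n1 n2 n3 (b - 1) (goodZ_trans _ s goodZ_lag)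
    ltac:(unfold n1; lia) ltac:(unfold n2; lia) ltac:(unfold n3; lia) HW).
Qed.
End Lag.

Lemma part5 : in_Lagrange (9 / 2).
Proof.
  exists lag. split.
  - intro i. pose proof (goodZ_lag i). lia.
  - apply is_LimSup_seq_unique. intros eps.
    assert (Hq : Rabs q < 1) by (rewrite Rabs_pos_eq; unfold q; lra).
    destruct (pow_lt_1_zero q Hq (eps / 2) ltac:(pose proof (cond_pos eps); lra)) as [B0 HB].
    assert (HB' : forall n, (n >= B0)%nat -> 2 * q ^ n < eps).
    { intros n Hn. specialize (HB n Hn). rewrite Rabs_pos_eq in HB by (apply pow_le; unfold q; lra). lra. }
    split.
    + intros N. set (b := S (Nat.max B0 N)).
      exists (st b + (b + 2 + 2))%nat. split.
      * pose proof (st_ge b). unfold b in *. lia.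
      * pose proof (lag_lower b ltac:(unfold b; lia)).
        pose proof (HB' (b - 1)%nat ltac:(unfold b; lia)). lra.
    + exists (st (S B0)). intros n Hn.
      destruct (find_block n) as [b Hbn].
      assert (S B0 <= b)%nat.
      { destruct (Nat.le_gt_cases (S B0) b); auto.
        pose proof (st_mono (S b) (S B0) ltac:(lia)). lia. }
      replace n with (st b + (n - st b))%nat by lia.
      pose proof (lag_upper b ltac:(lia) (n - st b) ltac:(rewrite st_S in Hbn; lia)).
      pose proof (HB' (b - 1)%nat ltac:(lia)). lra.
Qed.

Theorem lemma3p9 :
  (* [4; 4bar] + [0; 3, (1,3,1,2)bar] = 9/2 *)
  cf all4 + / cf s3_1312 = 9 / 2 /\
  (* [3; 1, 3, 4bar] + [0; (1,2,1,3)bar] = 9/2 *)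
  cf s313_4 + / cf s1213 = 9 / 2 /\
  (* 9/2 = m(4bar 3 (1312)bar) *)
  mval seq43 = Finite (9 / 2) /\
  (* 9/2 = lim_n m( (4^n 3 (1312)^n 1313)bar ) *)
  (exists v : nat -> R,
      (forall n, mval (periodic (block n)) = Finite (v n)) /\
      is_lim_seq v (9 / 2)) /\
  (* 9/2 in L cap Q *)
  in_Lagrange (9 / 2) /\
  (exists p q : Z, q <> 0%Z /\ 9 / 2 = IZR p / IZR q).
Proof.
  split. exact part1. split. exact part2. split. exact part3.
  split. exact part4. split. exact part5.
  exists 9%Z, 2%Z. split. discriminate. reflexivity.
Qed.
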